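(* For every integer $k>1$, $\gamma(k) \le (2k+2)\,(\gamma(k-1)+1) - 1$.
   Context: For words $C,S$, $C$ is an \emph{s-cover} of $S$ if for every position $i$ of $S$ there exist indices $j_0<\dots<j_{|C|-1}$ with $S[j_t]=C[t]$ for all $t$ and $i\in\{j_0,\dots,j_{|C|-1}\}$. An s-cover $C$ of $S$ is \emph{non-trivial} if $|C|<|S|$; a word is \emph{s-primitive} if it has no non-trivial s-cover. $\gamma(k)$ is the maximum length of an s-primitive word over an alphabet of size $k$. *)

(* Defs.v *)
From mathcomp Require Import all_boot.
Set Implicit Arguments. Unset Strict Implicit. Unset Printing Implicit Defensive.

Definition occurrence (T : eqType) (C S : seq T) (j : seq nat) : Prop :=
  [/\ sorted ltn j, size j = size C, all (fun t => t < size S) j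
    & forall t, t < size C -> onth S (nth 0 j t) = onth C t].

Definition s_cover (T : eqType) (C S : seq T) : Prop :=
  forall i, i < size S -> exists j, occurrence C S j /\ i \in j.

Definition s_primitive (T : eqType) (S : seq T) : Prop :=
  ~ exists C : seq T, s_cover C S /\ size C < size S.

Definition is_gamma (k g : nat) : Prop :=
  (exists S : seq 'I_k, s_primitive S /\ size S = g) /\
  (forall S : seq 'I_k, s_primitive S -> size S <= g).

(* Main.v *)
Require Import Defs.
From mathcomp Require Import all_boot.
From mathcomp Require Import zify.
From Stdlib Require Import Classical.
Set Implicit Arguments. Unset Strict Implicit. Unset Printing Implicit Defensive.


Section Occ.
Variable T : eqType.

Lemma occ_nil (S : seq T) : occurrence [::] S [::].
Proof. by split. Qed.

Lemma occ1 (x : T) : occurrence [:: x] [:: x] [:: 0].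
Proof. by split => // -[]. Qed.

Lemma occ_cat (C1 S1 C2 S2 : seq T) j1 j2 :
  occurrence C1 S1 j1 -> occurrence C2 S2 j2 ->
  occurrence (C1 ++ C2) (S1 ++ S2) (j1 ++ map (addn (size S1)) j2).
Proof.
case=> so1 sz1 a1 e1 [so2 sz2 a2 e2]; split.
- have tr : transitive ltn by move=> ???; apply: ltn_trans.
  rewrite (sorted_pairwise tr) pairwise_cat -!(sorted_pairwise tr) so1 /=.
  apply/andP; split; last first.
    by rewrite sorted_map; apply: sub_sorted so2 => x y /=; lia.
    apply/allrelP => x y xj1 /mapP[z _ ->].
    by have := allP a1 x xj1; lia.
- by rewrite !size_cat size_map sz1 sz2.
- rewrite all_cat size_cat; apply/andP; split.
    by apply/allP => x /(allP a1); lia.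
  by rewrite all_map; apply/allP => x /(allP a2) /=; lia.
- move=> t; rewrite size_cat => ht.
  rewrite nth_cat sz1 [onth (C1 ++ C2) t]onth_cat.
  case: (ltnP t (size C1)) => htc.
    have hlt : nth 0 j1 t < size S1 by apply: (allP a1); apply: mem_nth; rewrite sz1.
    by rewrite onth_cat hlt e1.
  have ht2 : t - size C1 < size C2 by lia.
  rewrite (nth_map 0) ?sz2 // onth_cat.
  have -> : (size S1 + nth 0 j2 (t - size C1) < size S1) = false by lia.
  by rewrite addKn e2.
Qed.

Lemma occ_subseq (C S : seq T) : subseq C S -> exists j, occurrence C S j.
Proof.
elim: S C => [|y S IH] C /=.
  by move/eqP->; exists [::]; apply: occ_nil.
case: C => [|x C]; first by exists [::]; apply: occ_nil.
case: eqP => [<- /IH [j oj]|_ /IH [j oj]].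
  by exists (0 :: map (addn 1) j); have := occ_cat (occ1 x) oj.
by exists (map (addn 1) j); have := occ_cat (occ_nil [:: y]) oj.
Qed.

Lemma occ_map (U : eqType) (f : T -> U) C S j :
  occurrence C S j -> occurrence (map f C) (map f S) j.
Proof.
case=> so sz a e; split => //; rewrite ?size_map //.
by move=> t ht; rewrite !onth_map e.
Qed.

Lemma cover_of_split (x0 : T) (C S : seq T) :
  (forall p, p < size S -> exists C1 C2,
     C = C1 ++ nth x0 S p :: C2 /\ subseq C1 (take p S) /\ subseq C2 (drop p.+1 S))
  -> s_cover C S.
Proof.
move=> H p hp; have [C1 [C2 [-> [s1 s2]]]] := H p hp.
have [j1 o1] := occ_subseq s1; have [j2 o2] := occ_subseq s2.
have o := occ_cat (occ_cat o1 (occ1 (nth x0 S p))) o2.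
have eS : (take p S ++ [:: nth x0 S p]) ++ drop p.+1 S = S.
  by rewrite -catA /= -drop_nth // cat_take_drop.
rewrite eS -catA /= in o.
eexists; split; first exact: o.
rewrite mem_cat; apply/orP; left; rewrite mem_cat size_take hp; apply/orP; right.
by rewrite /= addn0 mem_seq1.
Qed.

End Occ.


Section Fac.
Variable T : eqType.

Lemma occ_id (A : seq T) : occurrence A A (iota 0 (size A)).
Proof.
split; rewrite ?size_iota //; first exact: iota_ltn_sorted.
  by apply/allP => x; rewrite mem_iota.
by move=> t ht; rewrite nth_iota.
Qed.

Lemma factor_prim (A F B : seq T) : s_primitive (A ++ F ++ B) -> s_primitive F.
Proof.
move=> H [C [cov sz]]; apply: H; exists (A ++ C ++ B); split; last first.
  by rewrite !size_cat; lia.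
have [j0 [o0 _]] : exists j, occurrence C F j /\ 0 \in j by apply: cov; lia.
move=> i; rewrite !size_cat => hi.
case: (ltnP i (size A)) => hA.
  eexists; split; first exact: (occ_cat (occ_id A) (occ_cat o0 (occ_id B))).
  by rewrite mem_cat mem_iota hA.
case: (ltnP (i - size A) (size F)) => hF.
  have [j [o ij]] := cov _ hF.
  eexists; split; first exact: (occ_cat (occ_id A) (occ_cat o (occ_id B))).
  rewrite mem_cat; apply/orP; right; apply/mapP; exists (i - size A); last by lia.
  by rewrite mem_cat ij.
eexists; split; first exact: (occ_cat (occ_id A) (occ_cat o0 (occ_id B))).
rewrite mem_cat; apply/orP; right; apply/mapP; exists (i - size A); last by lia.
rewrite mem_cat; apply/orP; right; apply/mapP; exists (i - size A - size F); last by lia.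
by rewrite mem_iota; lia.
Qed.

Lemma cover_map (U : eqType) (f : T -> U) (C S : seq T) :
  s_cover C S -> s_cover (map f C) (map f S).
Proof.
move=> cov i; rewrite size_map => /cov [j [o ij]].
by exists j; split => //; apply: occ_map.
Qed.

End Fac.

Lemma avoid_bound (k g' : nat) (x : 'I_k) (S : seq 'I_k) :
  (forall S : seq 'I_k.-1, s_primitive S -> size S <= g') ->
  x \notin S -> s_primitive S -> size S <= g'.
Proof.
move=> Hg xS pS.
have eS : S = map (lift x) (pmap (unlift x) S).
  elim: S xS {pS} => //= y S IH; rewrite in_cons negb_or => /andP[xy xS].
  case: unliftP => [z ->|eq]; last by rewrite eq eqxx in xy.
  by rewrite /= -IH.
have -> : size S = size (pmap (unlift x) S) by rewrite {1}eS size_map.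
apply: Hg => -[C [cov sz]]; apply: pS; exists (map (lift x) C); split.
  by rewrite eS; apply: cover_map.
by rewrite size_map {1}eS size_map.
Qed.


Section Und.
Variable T : eqType.

Lemma lam_split (x0 : T) (S : seq T) p : p < size S ->
  exists l1 l2, undup S = l1 ++ nth x0 S p :: l2 /\ subseq l2 (drop p.+1 S).
Proof.
elim: S p => [|x S IH] p //= hp.
case: p hp => [_|p hp] /=.
  case: ifP => xS.
    have hi : index x S < size S by rewrite index_mem.
    have [l1 [l2 [e s]]] := IH _ hi; rewrite nth_index // in e.
    exists l1, l2; split => //; rewrite ?drop0; apply: subseq_trans s _; exact: drop_subseq.
  by exists [::], (undup S); rewrite drop0 undup_subseq.
have [l1 [l2 [e s]]] := IH _ hp.
case: ifP => xS; first by exists l1, l2.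
by exists (x :: l1), l2; rewrite e.
Qed.

Lemma undup_drop m (S : seq T) : {subset S <= drop m S} -> undup S = undup (drop m S).
Proof.
elim: S m => [|x S IH] [|m] //= sub.
have xS : x \in S.
  by have := sub x (mem_head _ _); rewrite /= => /(mem_subseq (drop_subseq S m)).
rewrite xS; apply: IH => y yS; apply: sub; exact: mem_behead.
Qed.

Definition phi (S : seq T) := rev (undup (rev S)).

Lemma phi_split (x0 : T) (S : seq T) p : p < size S ->
  exists l1 l2, phi S = l1 ++ nth x0 S p :: l2 /\ subseq l1 (take p S).
Proof.
move=> hp.
have hp' : size S - p.+1 < size (rev S) by rewrite size_rev; lia.
have [l1 [l2 [e s]]] := lam_split x0 hp'.
rewrite nth_rev ?size_rev // in e; last by lia.
have E : size S - (size S - p.+1).+1 = p by lia.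
rewrite E in e.
exists (rev l2), (rev l1); rewrite /phi e rev_cat rev_cons cat_rcons; split => //.
rewrite drop_rev in s; rewrite ?size_rev E in s.
by rewrite -subseq_rev revK.
Qed.

End Und.

Section Univ.
Variable T : eqType.

Lemma lam_suffix m (S : seq T) : {subset S <= drop m S} -> subseq (undup S) (drop m S).
Proof. by move=> h; rewrite (undup_drop h) undup_subseq. Qed.

Lemma phi_prefix m (S : seq T) : m <= size S -> {subset S <= take m S} ->
  subseq (phi S) (take m S).
Proof.
move=> hm h.
have e : drop (size S - m) (rev S) = rev (take m S).
  by rewrite drop_rev; congr (rev (take _ _)); lia.
have : subseq (undup (rev S)) (drop (size S - m) (rev S)).
  apply: lam_suffix => x; rewrite e !mem_rev; exact: h.
by rewrite e /phi -subseq_rev revK.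
Qed.

Lemma univ N (w U : seq T) :
  (forall i, i + N <= size U -> {subset w <= take N (drop i U)}) ->
  size w * N <= size U -> subseq w U.
Proof.
elim: w U => [|a w IH] U full hs; first exact: sub0seq.
rewrite -(cat_take_drop N U) -cat1s; apply: cat_subseq.
  rewrite sub1seq; have := full 0; rewrite drop0; apply; first by move: hs => /=; lia.
  exact: mem_head.
apply: IH.
  move=> i hi y yw; rewrite drop_drop; apply: (full (i + N)); first by rewrite size_drop in hi; lia.
  by rewrite inE yw orbT.
by rewrite size_drop; move: hs => /=; lia.
Qed.

End Univ.


Lemma take_drop_take (T : Type) i m N (X : seq T) : i + N <= m ->
  take N (drop i (take m X)) = take N (drop i X).
Proof.
move=> h; have -> : drop i (take m X) = take (m - i) (drop i X).
  by rewrite take_drop subnK //; lia.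
by rewrite take_takel //; lia.
Qed.

Lemma size_uniq_ord k (s : seq 'I_k) : uniq s -> size s <= k.
Proof.
move=> u; have := card_size s; move/card_uniqP: u => <- _.
by rewrite -[X in _ <= X]card_ord max_card.
Qed.

Lemma main_bound k g' (S : seq 'I_k) : 1 < k ->
  (forall S : seq 'I_k.-1, s_primitive S -> size S <= g') -> 1 <= g' ->
  s_primitive S -> size S < 2 * k * (g' + 1).
Proof.
move=> hk Hg hg pS; move Nd : (g' + 1) => N; move nd : (size S) => n.
rewrite ltnNge; apply/negP => hn. move: hn nd Nd; match goal with |- ?g => idtac g end; move=> hn nd Nd.
have full : forall i, i + N <= n -> forall x : 'I_k, x \in take N (drop i S).
  move=> i hi x; apply/negPn/negP => xF.
  have eS : S = take i S ++ take N (drop i S) ++ drop N (drop i S) by rewrite !cat_take_drop.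
  have pF : s_primitive (take N (drop i S)) by apply: (factor_prim (A:=take i S) (B:=drop N (drop i S))); rewrite -eS.
  have := avoid_bound Hg xF pF; rewrite size_take size_drop ?nd.
  case: ifP => ?; lia.
have x0 : 'I_k by exists 0; lia.
have hN1 : N <= k * N by rewrite leq_pmull; lia.
have hkN : 2 * k * 2 <= 2 * k * N by rewrite leq_mul2l; apply/orP; right; lia.
have szphi : size (phi S) <= k by apply: size_uniq_ord; rewrite rev_uniq undup_uniq.
have szlam : size (undup S) <= k by apply: size_uniq_ord; rewrite undup_uniq.
apply: pS; exists (phi S ++ undup S); split; last first.
  rewrite size_cat; move: hk szphi szlam hkN hn nd; move: (size (phi S)) (size (undup S)) (size S) => a b c; lia.
apply: (@cover_of_split _ x0 (phi S ++ undup S) S) => p hp; have hpn : p < n by rewrite -nd.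
case: (ltnP (p + k * N) n) => hpA.
- have [f1 [f2 [e s1]]] := phi_split x0 hp.
  exists f1, (f2 ++ undup S); rewrite e -catA /=; split => //; split => //.
  have eD : drop p.+1 S = take (n - N - p.+1) (drop p.+1 S) ++ drop (n - N) S.
    by rewrite -{1}(cat_take_drop (n - N - p.+1) (drop p.+1 S)) drop_drop; congr (_ ++ drop _ _); lia.
  rewrite eD; apply: cat_subseq.
    apply: (univ (N := N)).
      move=> i hi y _; rewrite size_take size_drop ?nd in hi.
      rewrite take_drop_take; last by move: hi; case: ifP => ?; lia.
      rewrite drop_drop; apply: full; move: hi; case: ifP => ?; lia.
    rewrite size_take size_drop ?nd.
    have : size f2 < k by move: szphi; rewrite e size_cat /=; lia.
    case: ifP => ?; nia.
  apply: lam_suffix => x _; apply: (mem_take (n0 := N)); apply: full; lia.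
- have [l1 [l2 [e s2]]] := lam_split x0 hp.
  exists (phi S ++ l1), l2; rewrite e catA; split => //; split => //.
  have hNp : N <= p by nia.
  have eT : take p S = take N S ++ drop N (take p S).
    by rewrite -{1}(cat_take_drop N (take p S)) take_takel.
  rewrite eT; apply: cat_subseq.
    apply: phi_prefix; first by nia.
    move=> x _; have := full 0; rewrite drop0; apply; nia.
  apply: (univ (N := N)).
    move=> i hi y _; rewrite size_drop size_take ?nd in hi.
    have hi' : i + N + N <= p by move: hi; case: ifP => ?; lia.
    rewrite drop_drop take_drop_take; last by lia.
    apply: full; lia.
  rewrite size_drop size_take ?nd.
  have : size l1 < k by move: szlam; rewrite e size_cat /=; lia.
  case: ifP => ?; nia.
Qed.


Lemma ex_max_prop (P : nat -> Prop) B : P 0 -> (forall n, P n -> n <= B) ->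
  exists g, P g /\ forall n, P n -> n <= g.
Proof.
elim: B => [|B IH] P0 hB.
  by exists 0; split => // n /hB.
case: (classic (P B.+1)) => h.
  by exists B.+1; split.
apply: IH => // n Pn; have := hB n Pn; rewrite leq_eqVlt; case/orP => // /eqP e.
by rewrite e in Pn.
Qed.

Lemma prim_nil (T : eqType) : s_primitive ([::] : seq T).
Proof. by case=> C []. Qed.

Lemma prim_single (T : eqType) (x : T) : s_primitive [:: x].
Proof.
case=> C [cov]; case: C cov => // cov _.
have [j [[_ sz _ _] ij]] := cov 0 isT.
by case: j sz ij.
Qed.

Unset Implicit Arguments.

Theorem mainTheorem6 (k : nat) : 1 < k ->
  forall g' : nat, is_gamma k.-1 g' ->
  exists g : nat, is_gamma k g /\ g <= (2 * k + 2) * (g' + 1) - 1.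
Proof.
move=> hk g' [_ Hg].
have hg : 1 <= g'.
  have x : 'I_k.-1 by exists 0; lia.
  by have := Hg _ (@prim_single _ x).
have bnd : forall S : seq 'I_k, s_primitive S -> size S <= 2 * k * (g' + 1) - 1.
  move=> S pS; have := main_bound hk Hg hg pS; lia.
have hB : forall n, (exists S : seq 'I_k, s_primitive S /\ size S = n) ->
    n <= 2 * k * (g' + 1) - 1.
  by move=> n [S [pS <-]]; apply: bnd.
have P0 : exists S : seq 'I_k, s_primitive S /\ size S = 0.
  by exists [::]; split => //; case=> C [].
have [g [Pg Hmax]] := @ex_max_prop (fun n => exists S : seq 'I_k, s_primitive S /\ size S = n)
   (2 * k * (g' + 1) - 1) P0 hB.
exists g; split.
  split => // S pS; apply: Hmax; by exists S.
have [S [pS <-]] := Pg; have := bnd S pS; nia.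
Qed.
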